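(* Let $A$ be a $2n\times 2n$ real symmetric positive definite matrix with $AJ = JA$, and fix $\xi\in\{c,w,h\}$. Then every $2n\times 2n$ real symmetric positive definite matrix $B$ with $d(B) = \Delta_\xi(A)^\uparrow$ lies in the convex hull of the symplectic orbit of $A$, i.e. $B = \sum_{j=1}^k p_j M_j^TAM_j$ for some $M_1,\dots,M_k\in\operatorname{Sp}(2n)$ and some probability vector $(p_1,\dots,p_k)$. In particular, $\operatorname{diag}(\Delta_\xi(A))\oplus\operatorname{diag}(\Delta_\xi(A))$ lies in the convex hull of the symplectic orbit of $A$.
   Context: Let $J = \begin{bmatrix} 0 & I_n \\ -I_n & 0\end{bmatrix}$; $\operatorname{Sp}(2n)$ is the group of real $2n\times 2n$ matrices $M$ with $M^TJM=J$. For a real symmetric positive definite $2n\times 2n$ matrix $A$, Williamson's theorem gives $M\in\operatorname{Sp}(2n)$ with $M^TAM = D\oplus D$, $D$ a positive diagonal $n\times n$ matrix unique up to permutation; its diagonal entries are the symplectic eigenvalues of $A$ and $d(A)$ denotes the vector of them in non-decreasing order. For $x\in\mathbb{R}^n$, $x^\uparrow$ is $x$ rearranged in non-decreasing order. Write $A = \begin{bmatrix} A_{11} & A_{12}\\ A_{12}^T & A_{22}\end{bmatrix}$ with $n\times n$ blocks, and let $\Delta_{11},\Delta_{12},\Delta_{22}\in\mathbb{R}^n$ be the vectors of diagonal entries of $A_{11},A_{12},A_{22}$. With all operations entrywise, define $\Delta_c(A) = \frac{\Delta_{11}+\Delta_{22}}{2}$, $\Delta_h(A) = \sqrt{\frac{\Delta_{11}^2+\Delta_{22}^2}{2}}$,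 $\Delta_w(A) = \sqrt{\frac{\Delta_{11}^2+\Delta_{22}^2+2\Delta_{12}^2}{2}}$. For a vector $v$, $\operatorname{diag}(v)$ is the diagonal matrix with diagonal $v$. *)

(* Defs.v *)
From HB Require Import structures.
From mathcomp Require Import all_boot all_order all_algebra.
From mathcomp Require Import reals.
Set Implicit Arguments. Unset Strict Implicit. Unset Printing Implicit Defensive.
Import Order.TTheory GRing.Theory Num.Theory.
Local Open Scope ring_scope.

Section Defs.
Variable R : realType.
Variable n : nat.

Definition Jmx : 'M[R]_(n + n) := block_mx 0 1%:M (- 1%:M) 0.

Definition symplectic (M : 'M[R]_(n + n)) : Prop := M^T *m Jmx *m M = Jmx.

Definition posdef (A : 'M[R]_(n + n)) : Prop :=
  A^T = A /\ forall x : 'cV[R]_(n + n), x != 0 -> 0 < (x^T *m A *m x) 0 0.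

Definition dsum (v : 'rV[R]_n) : 'M[R]_(n + n) :=
  block_mx (diag_mx v) 0 0 (diag_mx v).

Definition nondecreasing_vec (v : 'rV[R]_n) : Prop :=
  forall i j : 'I_n, (i <= j)%N -> v 0 i <= v 0 j.

(* "d(B) = v": v is the non-decreasingly ordered vector of symplectic
   eigenvalues of B, i.e. v is non-decreasing and B has a Williamson
   normal form M^T B M = diag(v) (+) diag(v) with M symplectic. *)
Definition symp_eig_eq (B : 'M[R]_(n + n)) (v : 'rV[R]_n) : Prop :=
  nondecreasing_vec v /\
  exists M : 'M[R]_(n + n), symplectic M /\ M^T *m B *m M = dsum v.

Definition sort_up (x : 'rV[R]_n) : 'rV[R]_n :=
  \row_(i < n) nth 0 (sort <=%R [seq x 0 j | j <- enum 'I_n]) i.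

Definition Delta11 (A : 'M[R]_(n + n)) : 'rV[R]_n :=
  \row_(i < n) A (lshift n i) (lshift n i).
Definition Delta12 (A : 'M[R]_(n + n)) : 'rV[R]_n :=
  \row_(i < n) A (lshift n i) (rshift n i).
Definition Delta22 (A : 'M[R]_(n + n)) : 'rV[R]_n :=
  \row_(i < n) A (rshift n i) (rshift n i).

Inductive xi_kind := Xi_c | Xi_w | Xi_h.

Definition Delta (k : xi_kind) (A : 'M[R]_(n + n)) : 'rV[R]_n :=
  let a := Delta11 A in let b := Delta12 A in let c := Delta22 A in
  match k with
  | Xi_c => \row_(i < n) ((a 0 i + c 0 i) / 2)
  | Xi_h => \row_(i < n) Num.sqrt ((a 0 i ^+ 2 + c 0 i ^+ 2) / 2)
  | Xi_w => \row_(i < n) Num.sqrt ((a 0 i ^+ 2 + c 0 i ^+ 2 + 2 * b 0 i ^+ 2) / 2)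
  end.

Definition in_symp_orbit_hull (A B : 'M[R]_(n + n)) : Prop :=
  exists (k : nat) (p : 'I_k -> R) (Ms : 'I_k -> 'M[R]_(n + n)),
    (forall j, 0 <= p j) /\ \sum_(j < k) p j = 1 /\
    (forall j, symplectic (Ms j)) /\
    B = \sum_(j < k) p j *: ((Ms j)^T *m A *m Ms j).

End Defs.

(* Main.v *)
Require Import Defs.
From HB Require Import structures.
From mathcomp Require Import all_boot all_order all_algebra all_fingroup.
From mathcomp Require Import reals ring lra.
Set Implicit Arguments. Unset Strict Implicit. Unset Printing Implicit Defensive.
Import Order.TTheory GRing.Theory Num.Theory.
Local Open Scope ring_scope.

Section Helpers.
Variable R : realType.
Variable n : nat.
Local Notation M := ('M[R]_(n + n)).
Local Notation J := (Jmx R n).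

Lemma symplectic_mul (X Y : M) : symplectic X -> symplectic Y -> symplectic (X *m Y).
Proof.
rewrite /symplectic => hX hY.
rewrite trmx_mul -[X in _ = X]hY -[X in Y^T *m X *m Y]hX.
by rewrite !mulmxA.
Qed.

Lemma hull_fin (T : finType) (A : M) (p : T -> R) (Ms : T -> M) :
  (forall x, 0 <= p x) -> \sum_x p x = 1 -> (forall x, symplectic (Ms x)) ->
  in_symp_orbit_hull A (\sum_x p x *: ((Ms x)^T *m A *m Ms x)).
Proof.
move=> p0 p1 sM.
exists #|T|, (fun j => p (enum_val j)), (fun j => Ms (enum_val j)).
have E (F : T -> M) : \sum_x F x = \sum_(j < #|T|) F (enum_val j).
  by rewrite -(big_enum_val F); apply: eq_bigl => x; rewrite inE.
have E' (F : T -> R) : \sum_x F x = \sum_(j < #|T|) F (enum_val j).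
  by rewrite -(big_enum_val F); apply: eq_bigl => x; rewrite inE.
split=> //; split; first by rewrite -E'.
by split=> //; rewrite E.
Qed.

Lemma hull_congr (A B N : M) : in_symp_orbit_hull A B -> symplectic N ->
  in_symp_orbit_hull A (N^T *m B *m N).
Proof.
move=> [k [p [Ms [p0 [p1 [sM ->]]]]]] sN.
exists k, p, (fun j => Ms j *m N); do 3!(split=> //).
  by move=> j; apply: symplectic_mul.
rewrite mulmx_sumr mulmx_suml; apply: eq_bigr => j _.
by rewrite -scalemxAr -scalemxAl trmx_mul !mulmxA.
Qed.

Lemma JJ : J *m J = - 1%:M.
Proof.
rewrite /Jmx mulmx_block !mulmx0 !mul0mx !mulmx1 !mul1mx !addr0 !add0r.
rewrite scalar_mx_block -!scaleN1r scale_block_mx !scaleN1r oppr0.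
by rewrite -!scaleN1r -scalemx1.
Qed.

Lemma J_unit : J \in unitmx.
Proof.
have h : J *m (- J) = 1%:M by rewrite mulmxN JJ opprK.
by case: (mulmx1_unit h).
Qed.

Lemma symplectic_unit (X : M) : symplectic X -> X \in unitmx.
Proof.
move=> hX; have := J_unit; rewrite -{1}hX !unitmx_mul.
by case/andP=> _ ->.
Qed.

Lemma symplectic_inv (X : M) : symplectic X -> symplectic (invmx X).
Proof.
move=> hX; have uX := symplectic_unit hX.
rewrite /symplectic -{1}hX -!mulmxA mulmxV // mulmx1.
by rewrite mulmxA -trmx_mul mulmxV // trmx1 mul1mx.
Qed.

End Helpers.
Section H2.
Variable R : realType.
Variable n : nat.
Local Notation M := ('M[R]_(n + n)).
Local Notation J := (Jmx R n).

Definition pi (k : 'I_(n + n)) : 'I_n :=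
  match split k with inl i => i | inr i => i end.
Lemma pi_l i : pi (lshift n i) = i.
Proof. by rewrite /pi; have := unsplitK (inl _ i); rewrite /unsplit /= => ->. Qed.
Lemma pi_r i : pi (rshift n i) = i.
Proof. by rewrite /pi; have := unsplitK (inr _ i); rewrite /unsplit /= => ->. Qed.

Definition sg (f : {ffun 'I_n -> bool}) (x : 'I_n) : R := if f x then 1 else -1.
Lemma sg2 f x : sg f x * sg f x = 1.
Proof. by rewrite /sg; case: (f x); rewrite ?mulr1 ?mulrNN ?mulr1. Qed.

Definition flip (a : 'I_n) (f : {ffun 'I_n -> bool}) : {ffun 'I_n -> bool} :=
  [ffun x => if x == a then ~~ f x else f x].
Lemma flipK a : involutive (flip a).
Proof.
move=> f; apply/ffunP => x; rewrite !ffunE.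
by case: eqP => _ //; rewrite negbK.
Qed.

Lemma sum_sg x y :
  \sum_(f : {ffun 'I_n -> bool}) sg f x * sg f y =
  if x == y then #|{ffun 'I_n -> bool}|%:R else 0.
Proof.
case: eqP => [<-|/eqP nxy].
  by rewrite (eq_bigr (fun _ => 1)) ?sumr_const // => f _; rewrite sg2.
set S := (\sum_f _).
have : S = - S.
  rewrite {1}/S (reindex_inj (inv_inj (flipK x))) /=.
  rewrite /S -sumrN.
  apply: eq_bigr => f _; rewrite /sg !ffunE eqxx [y == x]eq_sym (negbTE nxy).
  by case: (f x); rewrite /= ?mulNr ?opprK.
move=> h; have : S *+ 2 = 0 by rewrite mulr2n {1}h addNr.
by rewrite -mulr_natr => /eqP; rewrite mulf_eq0 pnatr_eq0 orbF => /eqP.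
Qed.

Definition Smx (f : {ffun 'I_n -> bool}) : M := diag_mx (\row_k sg f (pi k)).

Lemma Smx_entry f (X : M) i j :
  ((Smx f)^T *m X *m Smx f) i j = sg f (pi i) * X i j * sg f (pi j).
Proof. by rewrite /Smx tr_diag_mx mul_mx_diag mul_diag_mx !mxE. Qed.

Lemma Smx_sympl f : symplectic (Smx f).
Proof.
rewrite /symplectic; apply/matrixP => i j; rewrite Smx_entry /Jmx.
case: (split_ordP i) => i' ->; case: (split_ordP j) => j' ->;
  rewrite ?pi_l ?pi_r ?block_mxEul ?block_mxEur ?block_mxEdl ?block_mxEdr !mxE
    ?mulr0 ?mul0r //.
  by case: eqP => [->|]; rewrite ?mulr1n ?mulr0n ?mulr0 ?mul0r // mulr1 sg2.
by case: eqP => [->|]; rewrite ?mulr1n ?mulr0n ?oppr0 ?mulr0 ?mul0r // mulrN1 mulNr sg2.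
Qed.

Lemma A_struct (A : M) : A^T = A -> A *m J = J *m A ->
  forall i, A (rshift n i) (rshift n i) = A (lshift n i) (lshift n i) /\
            A (lshift n i) (rshift n i) = 0 /\ A (rshift n i) (lshift n i) = 0.
Proof.
move=> sA cA i.
have e := cA; rewrite -(submxK A) /Jmx !mulmx_block in e.
rewrite !(mulmx0, mul0mx, mulmx1, mul1mx, mulmxN, mulNmx, addr0, add0r) in e.
case/eq_block_mx: e => _ e2 e3 e4.
have ecb := sA; rewrite -[in X in X = _](submxK A) tr_block_mx in ecb.
move/matrixP: ecb => /(_ (lshift n i) (rshift n i)).
rewrite block_mxEur mxE => ecb.
have b0 : ursubmx A i i = 0.
  have h4 : dlsubmx A i i = - ursubmx A i i.
    by rewrite e4 [LHS]mxE.
  have : ursubmx A i i = - ursubmx A i i.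
    by rewrite -h4 ecb !mxE.
  move=> h; have : ursubmx A i i *+ 2 = 0 by rewrite mulr2n {1}h addNr.
  by rewrite -mulr_natr => /eqP; rewrite mulf_eq0 pnatr_eq0 orbF => /eqP.
split; first by move/matrixP: e2 => /(_ i i); rewrite !mxE => ->.
split; first by move: b0; rewrite !mxE.
by move: ecb b0; rewrite !mxE => <-.
Qed.

End H2.

Section H3.
Variable R : realType.
Variable n : nat.
Local Notation M := ('M[R]_(n + n)).
Local Notation J := (Jmx R n).
Local Notation T := {ffun 'I_n -> bool}.

Lemma avg (A : M) : A^T = A -> A *m J = J *m A ->
  dsum (Delta11 A) = \sum_(f : T) (#|T|%:R^-1) *: ((Smx R f)^T *m A *m Smx R f).
Proof.
move=> sA cA; have st := A_struct sA cA.
have N0 : (#|T|%:R : R) != 0 by rewrite pnatr_eq0 card_ffun card_bool card_ord -lt0n expn_gt0.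
apply/matrixP => i j; rewrite summxE.
under eq_bigr do rewrite mxE Smx_entry mulrA (mulrC _ (A i j)) -!mulrA.
rewrite -mulr_sumr -mulr_sumr sum_sg.
have -> : #|T|%:R^-1 * (A i j * (if pi i == pi j then #|T|%:R else 0)) =
          if pi i == pi j then A i j else 0 :> R.
  by case: eqP => _; rewrite ?mulr0 // mulrCA mulVf ?mulr1.
rewrite /dsum.
case: (split_ordP i) => x ->; case: (split_ordP j) => y ->;
  rewrite ?pi_l ?pi_r ?block_mxEul ?block_mxEur ?block_mxEdl ?block_mxEdr !mxE;
  case: eqP => [<-|]; rewrite ?mulr1n ?mulr0n //.
- by case: (st x) => [_ []].
- by case: (st x) => [_ []].
- by case: (st x) => [-> _].
Qed.

End H3.

Section H4.
Variable R : realType.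
Variable n : nat.
Local Notation M := ('M[R]_(n + n)).
Local Notation J := (Jmx R n).

Lemma diag_pos (A : M) i : posdef A -> 0 < A (lshift n i) (lshift n i).
Proof.
case=> _ /(_ (delta_mx (lshift n i) 0)) h.
have nz : delta_mx (lshift n i) 0 != 0 :> 'cV[R]_(n + n).
  apply/eqP => /matrixP /(_ (lshift n i) 0); rewrite !mxE !eqxx /=.
  by move/eqP; rewrite oner_eq0.
move: (h nz); rewrite trmx_delta -rowE -colE !mxE.
done.
Qed.

Lemma Delta_eq (A : M) xi : posdef A -> A *m J = J *m A -> Delta xi A = Delta11 A.
Proof.
move=> pA cA; have st := A_struct (proj1 pA) cA.
apply/matrixP => z i; rewrite (ord1 z).
have a0 := diag_pos i pA.
case: (st i) => e1 [e2 _].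
set a := A (lshift n i) (lshift n i).
case: xi; rewrite /Delta !mxE e1 ?e2 -/a.
- by field.
- have -> : (a ^+ 2 + a ^+ 2 + 2 * 0 ^+ 2) / 2 = a ^+ 2 by field.
  by rewrite sqrtr_sqr ger0_norm // ltW.
- have -> : (a ^+ 2 + a ^+ 2) / 2 = a ^+ 2 by field.
  by rewrite sqrtr_sqr ger0_norm // ltW.
Qed.

Definition Pm (s : 'S_n) : M := block_mx (perm_mx s) 0 0 (perm_mx s).

Lemma Pm_sympl s : symplectic (Pm s).
Proof.
rewrite /symplectic /Pm /Jmx tr_block_mx !trmx0 !mulmx_block.
rewrite !(mulmx0, mul0mx, mulmx1, mul1mx, mulmxN, mulNmx, addr0, add0r).
by rewrite tr_perm_mx -perm_mxM mulVg perm_mx1.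
Qed.

Lemma Pm_dsum s (v : 'rV[R]_n) :
  (Pm s)^T *m dsum v *m Pm s = dsum (\row_i v 0 (s^-1 i)%g).
Proof.
rewrite /dsum /Pm tr_block_mx !trmx0 !mulmx_block.
rewrite !(mulmx0, mul0mx, mulmx1, mul1mx, mulmxN, mulNmx, addr0, add0r).
have -> : (perm_mx s)^T *m diag_mx v *m perm_mx s = diag_mx (\row_i v 0 (s^-1 i)%g).
  rewrite tr_perm_mx -row_permE -[s in perm_mx s](invgK s) -col_permE.
  apply/matrixP => i j; rewrite !mxE.
  by rewrite (inj_eq (@perm_inj _ _)).
done.
Qed.

Lemma sort_perm (v : 'rV[R]_n) : exists p : 'S_n, sort_up v = \row_i v 0 (p i).
Proof.
have : perm_eq (sort <=%R [seq v 0 j | j <- enum 'I_n]) [tuple v 0 j | j < n].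
  by rewrite perm_sort /=.
case/tuple_permP => p hp; exists p.
apply/matrixP => z i; rewrite !mxE hp.
by rewrite nth_mktuple tnth_mktuple.
Qed.

End H4.

Theorem corollary3p5 (R : realType) (n : nat) (A : 'M[R]_(n + n))
    (xi : xi_kind) :
  posdef A -> A *m Jmx R n = Jmx R n *m A ->
  (forall B : 'M[R]_(n + n),
      posdef B -> symp_eig_eq B (sort_up (Delta xi A)) ->
      in_symp_orbit_hull A B) /\
  in_symp_orbit_hull A (dsum (Delta xi A)).
Proof.
move=> pA cA; have sA := proj1 pA.
rewrite (Delta_eq xi pA cA); set a := Delta11 A.
have N0 : (#|{ffun 'I_n -> bool}|%:R : R) != 0.
  by rewrite pnatr_eq0 card_ffun card_bool card_ord -lt0n expn_gt0.
have hull0 : in_symp_orbit_hull A (dsum a).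
  rewrite /a (avg sA cA); apply: hull_fin => [f||f].
  - by rewrite invr_ge0 ler0n.
  - have E : #|[pred x : {ffun 'I_n -> bool} | true]| = #|{ffun 'I_n -> bool}| by apply: eq_card.
    by rewrite sumr_const E -[X in X = 1]mulr_natr mulVf.
  - exact: Smx_sympl.
split=> // B pB [_ [Mx [sM eB]]].
have [p hp] := sort_perm a; rewrite hp in eB.
have uM := symplectic_unit sM.
have -> : B = (invmx Mx)^T *m ((Pm R (p^-1)%g)^T *m dsum a *m Pm R (p^-1)%g) *m invmx Mx.
  rewrite Pm_dsum.
  have -> : \row_i a 0 (p^-1^-1 i)%g = \row_i a 0 (p i).
    by apply/matrixP => z i; rewrite !mxE invgK.
  rewrite -eB !mulmxA -trmx_mul mulmxV // trmx1 mul1mx -mulmxA mulmxV // mulmx1.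
  done.
apply: hull_congr; last exact: symplectic_inv.
apply: hull_congr => //; exact: Pm_sympl.
Qed.
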